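(* Let $\Sigma$ be a finite ranked set, $X$ a ranked set and $G\in\mathsf{H}X$. Then there is an operation $f$, taking an arity-respecting $X$-indexed family of models (one model $\mathcal{A}_x$ in the image of $\lceil\cdot\rceil$ on $\mathsf{H}\Sigma$ of arity equal to that of $x$ for each $x\in X$) to a model, which is compatible with counting MSO and satisfies $f\big((\lceil\eta(x)\rceil)_{x\in X}\big)=\lceil [\![G]\!](\eta)\rceil$ (up to isomorphism) for every arity-preserving valuation $\eta:X\to\mathsf{H}\Sigma$.
   Context: A ranked set is a set in which each element has an arity in $\{0,1,2,\dots\}$. A sourced hypergraph of arity $n$ over $\Sigma$: finite vertex set, finite ranked set of hyperedges labelled arity-preservingly by $\Sigma$, incidence mapping each $m$-ary hyperedge $e$ to a non-repeating list $e[1],\dots,e[m]$ of vertices, injective sources $\{1,\dots,n\}\to$ vertices; $\mathsf{H}\Sigma$ denotes these up to isomorphism. Flattening of $K\in\mathsf{H}\mathsf{H}\Sigma$: hyperedges $(e,f)$, $e$ a hyperedge of $K$, $f$ a hyperedge of the label of $e$ (label from $f$); vertices: vertices of $K$ and pairs $(e,v)$ with $v$ a non-source vertex of the label of $e$; sources from $K$; incidence of $(e,f)$ is that of $f$ with $v\mapsto(e,v)$ for non-sources and $v\mapsto e[i]$ if $v$ is the $i$-th source of the label of $e$. $[\![G]\!](\eta)$ is the flattening of the element of $\mathsf{H}\mathsf{H}\Sigma$ obtained from $G$ by replacing each label $x$ by $\eta(x)$. For $K\in\mathsf{H}\Sigma$, the model $\lceil K\rceil$ has universe the disjoint union of vertices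 and hyperedges, for each $a\in\Sigma$ a unary relation of hyperedges labelled $a$, for each $i$ up to the maximal arity in $\Sigma$ a binary relation $\{(e,v):e[i]=v\}$, and for each $i$ up to the arity of $K$ a constant for the $i$-th source. Counting MSO (in extended syntax) is MSO extended with predicates $|Y|\equiv k\bmod m$ (true iff $Y$ finite of size $\equiv k$ mod $m$), a binary set-inclusion predicate, a unary ''is a singleton'' predicate, and for every quantifier-free first-order formula $\psi(x)$ with one free variable a set constant $[\psi]$ denoting the set of elements satisfying $\psi$; quantifier rank counts first- and second-order quantifiers alike. For $r\in\mathbb{N}$ and $M\subseteq\mathbb{N}$, two models over the same vocabulary are $(r,M)$-equivalent if they satisfy the same counting MSO sentences of quantifier rank at most $r$ using only moduli from $M$. An operation on families of models is compatible with counting MSO if for all $r$ and $M$, componentwise $(r,M)$-equivalent input families yield $(r,M)$-equivalent outputs. *)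

(* Defs.v *)
From Stdlib Require Import List.
From mathcomp Require Import all_boot.

Set Implicit Arguments.
Unset Strict Implicit.
Unset Printing Implicit Defensive.

(* A ranked set is a type L with an arity function ar : L -> nat.           *)
(* A (raw) sourced hypergraph of arity n over (L, ar): finite vertex type,  *)
(* finite hyperedge type, a labelling of hyperedges by L; the arity of a    *)
(* hyperedge is the arity of its label (so the labelling is arity-          *)
(* preserving by construction); incidence e[0..ar(lab e)-1] (0-based) and   *)
(* sources 0..n-1 (0-based).                                                 *)

Record hgraph (L : Type) (ar : L -> nat) (n : nat) := HGraph {
  hV : finType;
  hE : finType;
  hlab : hE -> L;
  hinc : forall e : hE, 'I_(ar (hlab e)) -> hV;
  hsrc : 'I_n -> hV
}.
Arguments hV {L ar n} h.
Arguments hE {L ar n} h.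
Arguments hlab {L ar n h} h0.
Arguments hinc {L ar n h} e _.
Arguments hsrc {L ar n} h i.

Definition wf_hgraph L (ar : L -> nat) n (H : hgraph ar n) : Prop :=
  (forall e, injective (@hinc _ _ _ H e)) /\ injective (@hsrc _ _ _ H).

Section Flatten.
Variables (S : Type) (arS : S -> nat) (X : Type) (arX : X -> nat) (n : nat).
Variable G : hgraph arX n.
Variable eta : forall x : X, hgraph arS (arX x).

Definition nonsrc k (H : hgraph arS k) (v : hV H) : bool :=
  [forall i, hsrc H i != v].

Lemma pick_none_nonsrc k (H : hgraph arS k) (v : hV H) :
  [pick i | hsrc H i == v] = None -> nonsrc v.
Proof.
case: pickP => // P _; apply/forallP => i; apply/negP => /eqP E.
by have := P i; rewrite E eqxx.
Qed.

Definition resolve k (H : hgraph arS k) (v : hV H) :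
    'I_k + {w : hV H | nonsrc w} :=
  match [pick i | hsrc H i == v] as o
        return [pick i | hsrc H i == v] = o -> 'I_k + {w : hV H | nonsrc w}
  with
  | Some i => fun _ => inl i
  | None => fun h => inr (exist _ v (pick_none_nonsrc h))
  end erefl.

Definition flatE_fam (e : hE G) : finType := hE (eta (hlab e)).
Definition flatNS_fam (e : hE G) : finType :=
  {w : hV (eta (hlab e)) | nonsrc w}.

Definition flatE : finType := {e : hE G & flatE_fam e}.
Definition flatV : finType := (hV G + {e : hE G & flatNS_fam e})%type.

Definition flat_lab (p : flatE) : S :=
  @hlab _ _ _ (eta (hlab (tag p))) (tagged p).

Definition flat_inc (p : flatE) (j : 'I_(arS (flat_lab p))) : flatV :=
  match resolve (@hinc _ _ _ (eta (hlab (tag p))) (tagged p) j) with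
  | inl i => inl (@hinc _ _ _ G (tag p) i)
  | inr w => inr (Tagged flatNS_fam w)
  end.

Definition flat_subst : hgraph arS n :=
  @HGraph S arS n (hV G + {e : hE G & flatNS_fam e})%type flatE
    flat_lab flat_inc (fun i => inl (hsrc G i)).

End Flatten.

(* Models over the vocabulary of hypergraphs over a finite ranked set Sig:  *)
(* unary relations indexed by Sig, binary relations indexed by 'I_m (m the  *)
(* maximal arity; index i stands for the paper's i+1), constants 'I_n.      *)

Definition maxar (Sig : finType) (arS : Sig -> nat) : nat := \max_(a : Sig) arS a.

Record model (Sig : Type) (m n : nat) := Model {
  univ : Type;
  urel : Sig -> univ -> Prop;
  brel : 'I_m -> univ -> univ -> Prop;
  cst  : 'I_n -> univ
}.
Arguments univ {Sig m n} m.
Arguments urel {Sig m n} m _ _.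
Arguments brel {Sig m n} m _ _ _.
Arguments cst {Sig m n} m _.

Definition mdl (Sig : finType) (arS : Sig -> nat) n (K : hgraph arS n) :
    model Sig (maxar arS) n :=
  @Model Sig (maxar arS) n (hV K + hE K)%type
    (fun a z => match z with inr e => hlab e = a | inl _ => False end)
    (fun i z1 z2 => match z1, z2 with
       | inr e, inl v =>
           exists h : (i < arS (hlab e))%N, hinc e (Ordinal h) = v
       | _, _ => False end)
    (fun c => inl (hsrc K c)).

Definition model_iso Sig m n (A B : model Sig m n) : Prop :=
  exists (h : univ A -> univ B) (g : univ B -> univ A),
    cancel h g /\ cancel g h /\
    (forall a z, urel A a z <-> urel B a (h z)) /\
    (forall i z1 z2, brel A i z1 z2 <-> brel B i (h z1) (h z2)) /\
    (forall c, h (cst A c) = cst B c).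

Section CMSO.
Variables (Sig : Type) (m n : nat).

(* quantifier-free first-order formulas psi(x) with one free variable x *)
Inductive qterm := QX | QC of 'I_n.
Inductive qf :=
  | QUn of Sig & qterm
  | QBin of 'I_m & qterm & qterm
  | QEq of qterm & qterm
  | QNot of qf
  | QAnd of qf & qf.

Inductive fterm := FVar of nat | FCst of 'I_n.
Inductive sterm := SVar of nat | SCst of qf.

Inductive cmso :=
  | CUn of Sig & fterm
  | CBin of 'I_m & fterm & fterm
  | CEq of fterm & fterm
  | CMem of fterm & sterm
  | CCard of sterm & nat & nat
  | CSub of sterm & sterm
  | CSing of sterm
  | CNot of cmso
  | CAnd of cmso & cmso
  | CEx1 of nat & cmso
  | CEx2 of nat & cmso.

Fixpoint qrank (f : cmso) : nat :=
  match f with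
  | CNot g => qrank g
  | CAnd g h => maxn (qrank g) (qrank h)
  | CEx1 _ g | CEx2 _ g => (qrank g).+1
  | _ => 0
  end.

Fixpoint moduli_in (M : nat -> Prop) (f : cmso) : Prop :=
  match f with
  | CCard _ _ p => M p /\ (0 < p)%N
  | CNot g => moduli_in M g
  | CAnd g h => moduli_in M g /\ moduli_in M h
  | CEx1 _ g | CEx2 _ g => moduli_in M g
  | _ => True
  end.

Definition fterm_ok (b1 : seq nat) (t : fterm) : bool :=
  match t with FVar i => i \in b1 | FCst _ => true end.
Definition sterm_ok (b2 : seq nat) (Y : sterm) : bool :=
  match Y with SVar j => j \in b2 | SCst _ => true end.

Fixpoint closed_in (b1 b2 : seq nat) (f : cmso) : bool :=
  match f with
  | CUn _ t => fterm_ok b1 t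
  | CBin _ t u | CEq t u => fterm_ok b1 t && fterm_ok b1 u
  | CMem t Y => fterm_ok b1 t && sterm_ok b2 Y
  | CCard Y _ _ | CSing Y => sterm_ok b2 Y
  | CSub Y Z => sterm_ok b2 Y && sterm_ok b2 Z
  | CNot g => closed_in b1 b2 g
  | CAnd g h => closed_in b1 b2 g && closed_in b1 b2 h
  | CEx1 i g => closed_in (i :: b1) b2 g
  | CEx2 j g => closed_in b1 (j :: b2) g
  end.

Definition sentence (f : cmso) : bool := closed_in [::] [::] f.

Variable A : model Sig m n.

Definition qterm_val (x : univ A) (t : qterm) : univ A :=
  match t with QX => x | QC c => cst A c end.

Fixpoint qf_sat (x : univ A) (p : qf) : Prop :=
  match p with
  | QUn a t => urel A a (qterm_val x t)
  | QBin i t u => brel A i (qterm_val x t) (qterm_val x u)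
  | QEq t u => qterm_val x t = qterm_val x u
  | QNot q => ~ qf_sat x q
  | QAnd q r => qf_sat x q /\ qf_sat x r
  end.

Definition card_mod (Y : univ A -> Prop) (k p : nat) : Prop :=
  exists l : list (univ A), NoDup l /\ (forall z, Y z <-> In z l) /\
    length l = k %[mod p].

Definition env1 := nat -> option (univ A).
Definition env2 := nat -> (univ A -> Prop).

Definition fterm_val (r1 : env1) (t : fterm) : option (univ A) :=
  match t with FVar i => r1 i | FCst c => Some (cst A c) end.
Definition sterm_val (r2 : env2) (Y : sterm) : univ A -> Prop :=
  match Y with SVar j => r2 j | SCst p => fun z => qf_sat z p end.

Fixpoint sat (r1 : env1) (r2 : env2) (f : cmso) : Prop :=
  match f with
  | CUn a t => exists z, fterm_val r1 t = Some z /\ urel A a z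
  | CBin i t u => exists z1 z2, fterm_val r1 t = Some z1 /\
                   fterm_val r1 u = Some z2 /\ brel A i z1 z2
  | CEq t u => exists z, fterm_val r1 t = Some z /\ fterm_val r1 u = Some z
  | CMem t Y => exists z, fterm_val r1 t = Some z /\ sterm_val r2 Y z
  | CCard Y k p => card_mod (sterm_val r2 Y) k p
  | CSub Y Z => forall z, sterm_val r2 Y z -> sterm_val r2 Z z
  | CSing Y => exists z, forall z', sterm_val r2 Y z' <-> z' = z
  | CNot g => ~ sat r1 r2 g
  | CAnd g h => sat r1 r2 g /\ sat r1 r2 h
  | CEx1 i g => exists z : univ A,
      sat (fun i' => if i' == i then Some z else r1 i') r2 g
  | CEx2 j g => exists Z : univ A -> Prop,
      sat r1 (fun j' => if j' == j then Z else r2 j') g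
  end.

Definition models (f : cmso) : Prop := sat (fun _ => None) (fun _ _ => False) f.

End CMSO.

Definition rM_equiv Sig m n (r : nat) (M : nat -> Prop) (A B : model Sig m n)
  : Prop :=
  forall f : cmso Sig m n, sentence f -> (qrank f <= r)%N -> moduli_in M f ->
    (models A f <-> models B f).

Definition cmso_compatible Sig (m : nat) (X : Type) (arX : X -> nat) (n : nat)
    (dom : forall x, model Sig m (arX x) -> Prop)
    (f : (forall x : X, model Sig m (arX x)) -> model Sig m n) : Prop :=
  forall (r : nat) (M : nat -> Prop) (A B : forall x, model Sig m (arX x)),
    (forall x, dom x (A x)) -> (forall x, dom x (B x)) ->
    (forall x, rM_equiv r M (A x) (B x)) ->
    rM_equiv r M (f A) (f B).

Definition in_image (Sig : finType) (arS : Sig -> nat) k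
    (A : model Sig (maxar arS) k) : Prop :=
  exists K : hgraph arS k, wf_hgraph K /\ model_iso A (mdl K).

(* Main.v *)
From Stdlib Require Import List ClassicalEpsilon ProofIrrelevance FunctionalExtensionality PropExtensionality Eqdep_dec.
Require Import Defs.
From mathcomp Require Import all_boot.
Set Implicit Arguments.
Unset Strict Implicit.
Unset Printing Implicit Defensive.
Arguments QX {n}. Arguments QC {n} _. Arguments QEq {Sig m n} _ _.
Arguments QUn {Sig m n} _ _. Arguments QBin {Sig m n} _ _ _.
Arguments FVar {n} _. Arguments FCst {n} _. Arguments SVar {Sig m n} _.
Arguments CUn {Sig m n} _ _. Arguments CBin {Sig m n} _ _ _. Arguments CEq {Sig m n} _ _.

Definition pb (P : Prop) : bool := if excluded_middle_informative P then true else false.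
Lemma pbP (P : Prop) : pb P = true <-> P.
Proof. rewrite /pb; case: excluded_middle_informative => //. Qed.

Section Util.
Variables (Sig : Type) (m n : nat).

Definition qT : qf Sig m n := QEq QX QX.
Definition qF : qf Sig m n := QNot qT.
Definition TT : cmso Sig m n := CSub (SCst qT) (SCst qT).
Definition FF : cmso Sig m n := CNot TT.

Definition isx (x : nat) (t : fterm n) : bool :=
  match t with FVar y => y == x | _ => false end.

Fixpoint kill (x : nat) (f : cmso Sig m n) : cmso Sig m n :=
  match f with
  | CUn _ t => if isx x t then FF else f
  | CBin _ t u => if isx x t || isx x u then FF else f
  | CEq t u => if isx x t || isx x u then FF else f
  | CMem t _ => if isx x t then FF else f
  | CNot g => CNot (kill x g)
  | CAnd g h => CAnd (kill x g) (kill x h)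
  | CEx1 y g => if y == x then f else CEx1 y (kill x g)
  | CEx2 Y g => CEx2 Y (kill x g)
  | _ => f
  end.

Fixpoint conjB (bs : seq bool) (gs : seq (cmso Sig m n)) : cmso Sig m n :=
  match bs, gs with
  | b :: bs', g :: gs' => CAnd (if b then g else CNot g) (conjB bs' gs')
  | _, _ => TT
  end.

Fixpoint allbits (k : nat) : seq (seq bool) :=
  match k with
  | 0 => [:: [::]]
  | k'.+1 => [seq true :: s | s <- allbits k'] ++ [seq false :: s | s <- allbits k']
  end.

Lemma In_smap A B (f : A -> B) (l : seq A) y :
  In y (map f l) <-> exists x, In x l /\ y = f x.
Proof.
elim: l => [|a l IH] /=; first by split => // [[x []]].
split.
- case=> [E|H]; first by exists a; auto.
  by case/IH: H => x [H1 H2]; exists x; auto.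
- case=> x [[E|H] E2]; first by left; subst.
  by right; apply IH; exists x.
Qed.

Lemma allbitsP (bs : seq bool) : In bs (allbits (size bs)).
Proof.
elim: bs => [|b bs IH] /=; first by left.
apply/in_or_app; case: b; [left|right]; apply/In_smap; exists bs; auto.
Qed.

Lemma fterm_ok_mono b b' (t : fterm n) : {subset b <= b'} -> fterm_ok b t -> fterm_ok b' t.
Proof. by case: t => //= i S /S. Qed.
Lemma sterm_ok_mono b b' (t : sterm Sig m n) : {subset b <= b'} -> sterm_ok b t -> sterm_ok b' t.
Proof. by case: t => //= i S /S. Qed.

Lemma closed_mono b1 b2 b1' b2' (f : cmso Sig m n) :
  {subset b1 <= b1'} -> {subset b2 <= b2'} ->
  closed_in b1 b2 f -> closed_in b1' b2' f.
Proof.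
elim: f b1 b2 b1' b2' => /=.
- by move=> _ t b1 b2 b1' b2' S1 S2; apply: fterm_ok_mono.
- move=> _ t u b1 b2 b1' b2' S1 S2 /andP[? ?]; apply/andP; split; exact: fterm_ok_mono S1 _.
- move=> t u b1 b2 b1' b2' S1 S2 /andP[? ?]; apply/andP; split; exact: fterm_ok_mono S1 _.
- move=> t u b1 b2 b1' b2' S1 S2 /andP[? ?]; apply/andP; split.
  exact: fterm_ok_mono S1 _. exact: sterm_ok_mono S2 _.
- by move=> t _ _ b1 b2 b1' b2' S1 S2; apply: sterm_ok_mono.
- move=> t u b1 b2 b1' b2' S1 S2 /andP[? ?]; apply/andP; split; exact: sterm_ok_mono S2 _.
- by move=> t b1 b2 b1' b2' S1 S2; apply: sterm_ok_mono.
- by move=> g IH b1 b2 b1' b2' S1 S2; apply: IH.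
- move=> g IHg h IHh b1 b2 b1' b2' S1 S2 /andP[? ?]; apply/andP; split.
  + by apply: IHg S1 S2 _.
  + by apply: IHh S1 S2 _.
- move=> i g IH b1 b2 b1' b2' S1 S2; apply: IH => // z.
  by rewrite !inE => /orP[->//|/S1 ->]; rewrite orbT.
- move=> i g IH b1 b2 b1' b2' S1 S2; apply: IH => // z.
  by rewrite !inE => /orP[->//|/S2 ->]; rewrite orbT.
Qed.

Lemma isx_ok x b1 (t : fterm n) : ~~ isx x t -> fterm_ok (x :: b1) t -> fterm_ok b1 t.
Proof. by case: t => //= i; rewrite inE => /negbTE ->. Qed.

Lemma kill_props x (f : cmso Sig m n) :
  (qrank (kill x f) <= qrank f)%N /\
  (forall M, moduli_in M f -> moduli_in M (kill x f)) /\
  (forall b1 b2, closed_in (x :: b1) b2 f -> closed_in b1 b2 (kill x f)).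
Proof.
elim: f => /=.
- move=> a t; case: ifP => H; first by split => //; split.
  split => //; split => // b1 b2; exact: isx_ok (negbT H).
- move=> a t u; case: ifP => H; first by split => //; split.
  split => //; split => // b1 b2 /andP[O1 O2].
  move/negbT: H; rewrite negb_or => /andP[N1 N2]; apply/andP; split.
  exact: (isx_ok N1 O1). exact: (isx_ok N2 O2).
- move=> t u; case: ifP => H; first by split => //; split.
  split => //; split => // b1 b2 /andP[O1 O2].
  move/negbT: H; rewrite negb_or => /andP[N1 N2]; apply/andP; split.
  exact: (isx_ok N1 O1). exact: (isx_ok N2 O2).
- move=> t Y; case: ifP => H; first by split => //; split.
  split => //; split => // b1 b2 /andP[O1 O2].
  apply/andP; split => //; exact: isx_ok (negbT H) O1.
- by move=> *; split => //; split => *.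
- by move=> *; split => //; split => *.
- by move=> *; split => //; split => *.
- by move=> g H.
- move=> g [Hg1 [Hg2 Hg3]] h [Hh1 [Hh2 Hh3]]; split; [|split].
  + by rewrite geq_max !leq_max Hg1 Hh1 orbT.
  + by move=> M [H1 H2]; split; [exact: (Hg2 M H1) | exact: (Hh2 M H2)].
  + by move=> b1 b2 /andP[H1 H2]; apply/andP; split; [exact: (Hg3 _ _ H1) | exact: (Hh3 _ _ H2)].
- move=> y g [Hg1 [Hg2 Hg3]]; case: eqP => [->|Hyx] /=; split => //; split => //.
  + move=> b1 b2; apply: closed_mono => // z; rewrite !inE.
    by case/orP => [->|/orP[->|->]]; rewrite ?orbT.
  + move=> b1 b2 H; apply: Hg3; move: H; apply: closed_mono => // z; rewrite !inE.
    by case/orP => [->|/orP[->|->]]; rewrite ?orbT.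
- move=> Y g [Hg1 [Hg2 Hg3]] /=; split => //; split => //.
  move=> b1 b2 H; apply: Hg3; move: H; apply: closed_mono => // z.
Qed.

Lemma conjB_props bs (gs : seq (cmso Sig m n)) r M b1 b2 :
  (forall g, In g gs -> (qrank g <= r)%N /\ moduli_in M g /\ closed_in b1 b2 g) ->
  (qrank (conjB bs gs) <= r)%N /\ moduli_in M (conjB bs gs) /\ closed_in b1 b2 (conjB bs gs).
Proof.
elim: gs bs => [|g gs IH] [|b bs] //= H.
have [H1 [H2 H3]] := H g (or_introl erefl).
have [I1 [I2 I3]] := IH bs (fun g' Hg' => H g' (or_intror Hg')).
by case: b => /=; rewrite geq_max H1 I1 H3 I3.
Qed.

Lemma isxN (A : model Sig m n) x (r1 : env1 A) (t : fterm n) : isx x t ->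
   fterm_val (fun i => if i == x then None else r1 i) t = None.
Proof. by case: t => //= i /eqP ->; rewrite eqxx. Qed.
Lemma isxF (A : model Sig m n) x (r1 : env1 A) (t : fterm n) : ~~ isx x t ->
   fterm_val (fun i => if i == x then None else r1 i) t = fterm_val r1 t.
Proof. by case: t => //= i /negbTE ->. Qed.

Lemma conjB_rank bs (gs : seq (cmso Sig m n)) r :
  (forall g, In g gs -> (qrank g <= r)%N) -> (qrank (conjB bs gs) <= r)%N.
Proof.
elim: gs bs => [|g gs IH] [|b bs] //= H.
by rewrite geq_max IH; [case: b; rewrite /= H //; left | move=> ? ?; apply: H; right].
Qed.
Lemma conjB_mod bs (gs : seq (cmso Sig m n)) M :
  (forall g, In g gs -> moduli_in M g) -> moduli_in M (conjB bs gs).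
Proof.
elim: gs bs => [|g gs IH] [|b bs] //= H; split.
- by case: b => /=; apply: H; left.
- by apply: IH => ? ?; apply: H; right.
Qed.
Lemma conjB_closed bs (gs : seq (cmso Sig m n)) b1 b2 :
  (forall g, In g gs -> closed_in b1 b2 g) -> closed_in b1 b2 (conjB bs gs).
Proof.
elim: gs bs => [|g gs IH] [|b bs] //= H; apply/andP; split.
- by case: b => /=; apply: H; left.
- by apply: IH => ? ?; apply: H; right.
Qed.

Lemma kill_sat (A : model Sig m n) x (f : cmso Sig m n) (r1 : env1 A) (r2 : env2 A) :
  sat r1 r2 (kill x f) <-> sat (fun i => if i == x then None else r1 i) r2 f.
Proof.
have FFf : forall (r1 : env1 A) r2, ~ sat r1 r2 FF by move=> ? ? /=; apply; auto.
elim: f r1 r2 => /=.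
- move=> a t r1 r2; case: ifP => H.
  + by split => [/FFf//|[z []]]; rewrite isxN.
  + by rewrite /= isxF ?H.
- move=> a t u r1 r2; case: ifP => H.
  + split => [/FFf//|[z1 [z2 []]]].
    by case/orP: H => /isxN -> // _ [].
  + by move/negbT: H; rewrite negb_or => /andP[H1 H2]; rewrite /= !isxF.
- move=> t u r1 r2; case: ifP => H.
  + split => [/FFf//|[z []]].
    by case/orP: H => /isxN -> // _.
  + by move/negbT: H; rewrite negb_or => /andP[H1 H2]; rewrite /= !isxF.
- move=> t Y r1 r2; case: ifP => H.
  + by split => [/FFf//|[z []]]; rewrite isxN.
  + by rewrite /= isxF ?H.
- by [].
- by [].
- by [].
- move=> g IH r1 r2; by rewrite IH.
- move=> g IHg h IHh r1 r2; by rewrite IHg IHh.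
- move=> y g IH r1 r2; case: eqP => [->|Hyx] /=.
  + split => -[z Hz]; exists z; move: Hz; congr (sat _ _ _);
      apply: functional_extensionality => i; by case: (i == x).
  + have E : forall z, (fun i => if i == x then None else
              if i == y then Some z else r1 i) =
       (fun i => if i == y then Some z else if i == x then None else r1 i).
      move=> z; apply: functional_extensionality => i.
      case: (eqVneq i x) => [->|//]; case: (eqVneq x y) => // Exy.
      by case: Hyx; rewrite Exy.
    split => -[z Hz]; exists z; move: Hz; rewrite IH E //.
- move=> Y g IH r1 r2; split => -[Z HZ]; exists Z; move: HZ; by rewrite IH.
Qed.

End Util.
Arguments qT {Sig m n}. Arguments qF {Sig m n}. Arguments TT {Sig m n}. Arguments FF {Sig m n}.

Section Sem.
Variables (Sig : Type) (m n : nat).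

Definition bitsOf (A : model Sig m n) (r1 : env1 A) (r2 : env2 A) (gs : seq (cmso Sig m n)) :=
  [seq pb (sat r1 r2 g) | g <- gs].

Lemma TT_sat (A : model Sig m n) (r1 : env1 A) r2 : sat r1 r2 TT.
Proof. by []. Qed.

Lemma conjB_self (A : model Sig m n) (r1 : env1 A) r2 gs :
  sat r1 r2 (conjB (bitsOf r1 r2 gs) gs).
Proof.
elim: gs => [|g gs IH] //=; split => //.
rewrite /pb; case: excluded_middle_informative => //.
Qed.

Lemma conjB_agree (A B : model Sig m n) (r1 : env1 A) r2 (r1' : env1 B) r2' gs :
  sat r1' r2' (conjB (bitsOf r1 r2 gs) gs) ->
  forall g, In g gs -> (sat r1 r2 g <-> sat r1' r2' g).
Proof.
elim: gs => [|g gs IH] //= [H1 H2] g' [<-|Hg']; last by apply: IH.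
move: H1; rewrite /pb; case: excluded_middle_informative => H //= H'.
Qed.

Lemma size_bitsOf (A : model Sig m n) (r1 : env1 A) r2 gs : size (bitsOf r1 r2 gs) = size gs.
Proof. by rewrite size_map. Qed.

End Sem.

Section Fin.
Variable T : Type.
Definition fin_card (P : T -> Prop) (N : nat) :=
  exists l : list T, NoDup l /\ (forall z, P z <-> In z l) /\ length l = N.

Lemma fin_card_uniq P N N' : fin_card P N -> fin_card P N' -> N = N'.
Proof.
move=> [l [H1 [H2 <-]]] [l' [H1' [H2' <-]]].
apply/eqP; rewrite eqn_leq; apply/andP; split; apply/leP; apply: NoDup_incl_length => //.
- by move=> z /H2 /H2'.
- by move=> z /H2' /H2.
Qed.

Lemma cover_exact (P : T -> Prop) l : (forall z, P z -> In z l) ->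
  exists l', NoDup l' /\ forall z, P z <-> In z l'.
Proof.
elim: l P => [|a l IH] P HP.
  by exists nil; split; [constructor | move=> z; split => // /HP].
have HP' : forall z, P z /\ z <> a -> In z l.
  by move=> z [Pz za]; case: (HP z Pz) => // E; case: za.
have [l' [N' H']] := IH (fun z => P z /\ z <> a) HP'.
case: (excluded_middle_informative (P a)) => Pa.
- exists (a :: l'); split.
  + by constructor => // /H' [].
  + move=> z; split.
    * by move=> Pz; case: (excluded_middle_informative (z = a)) => [->|za]; [left|right; apply/H'].
    * by case=> [<-//|/H' []].
- exists l'; split => // z; split.
  + by move=> Pz; apply/H'; split => // E; apply: Pa; rewrite -E.
  + by move/H' => [].
Qed.

Lemma fin_card_ext (P Q : T -> Prop) N : (forall z, P z <-> Q z) -> fin_card P N -> fin_card Q N.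
Proof. move=> H [l [H1 [H2 H3]]]; exists l; split => //; split => // z; rewrite -H2; split; apply H. Qed.

Lemma fin_card0 : fin_card (fun _ => False) 0.
Proof. by exists nil; split; [constructor|split]. Qed.

Lemma fin_card_union (P Q : T -> Prop) a b :
  (forall z, P z -> Q z -> False) -> fin_card P a -> fin_card Q b ->
  fin_card (fun z => P z \/ Q z) (a + b).
Proof.
move=> D [l [N1 [H1 <-]]] [l' [N2 [H2 <-]]]; exists (l ++ l'); split; [|split].
- by apply: NoDup_app => // z /H1 Pz /H2 Qz; apply: D Pz Qz.
- move=> z; rewrite in_app_iff; split; case; [left|right|left|right]; by [apply/H1|apply/H2].
- by rewrite length_app.
Qed.

Lemma NoDup_smap_in (S : Type) (f : S -> T) (l : list S) :
  (forall x y, In x l -> In y l -> f x = f y -> x = y) -> NoDup l -> NoDup (map f l).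
Proof.
elim: l => [|a l IH] /= Hinj; first by constructor.
move=> Hnd; inversion Hnd; subst; constructor; last first.
  by apply: IH => // x y Hx Hy; apply: Hinj; right.
move/In_smap => [x [Hx E]]; have := Hinj _ _ (or_introl erefl) (or_intror Hx) E.
by move=> Eax; subst.
Qed.

Lemma length_smap (S : Type) (f : S -> T) (l : list S) : length (map f l) = length l.
Proof. by elim: l => //= a l ->. Qed.

End Fin.
Lemma fin_card_image (S T : Type) (P : S -> Prop) (f : S -> T) a :
  (forall x y, P x -> P y -> f x = f y -> x = y) -> fin_card P a ->
  fin_card (fun u => exists z, P z /\ u = f z) a.
Proof.
move=> Hinj [l [N1 [H1 <-]]]; exists (map f l); split; [|split].
- by apply: NoDup_smap_in => // x y /H1 Hx /H1 Hy; apply: Hinj.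
- move=> u; rewrite In_smap; split => -[z [Hz ->]]; exists z; split => //; by apply/H1.
- exact: length_smap.
Qed.


Lemma In_mem (T : eqType) (x : T) (s : seq T) : In x s <-> x \in s.
Proof.
elim: s => [|a s IH] //=; rewrite inE; split.
- by case=> [->|/IH ->]; rewrite ?eqxx ?orbT.
- by case/orP => [/eqP ->|/IH]; auto.
Qed.

Lemma In_cat A (x : A) (s1 s2 : seq A) : In x (s1 ++ s2) <-> In x s1 \/ In x s2.
Proof. by elim: s1 => [|a s1 IH] /=; [split; auto; case|rewrite IH; tauto]. Qed.

Lemma uniq_NoDup (T : eqType) (s : seq T) : uniq s -> NoDup s.
Proof.
elim: s => [|a s IH] /=; first by constructor.
by case/andP => Ha Hs; constructor; [move/In_mem; apply/negP|apply: IH].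
Qed.

Lemma In_pmap (S T : Type) (f : S -> option T) (l : seq S) y :
  In y (pmap f l) <-> exists x, In x l /\ f x = Some y.
Proof.
elim: l => [|a l IH] /=; first by split => // -[x []].
case E: (f a) => [b|] /=; rewrite IH; split.
- by case=> [<-|[x [? ?]]]; [exists a; auto|exists x; auto].
- by case=> x [[<-|Hx] Hfx]; [left; rewrite E in Hfx; case: Hfx|right; exists x].
- by case=> x [? ?]; exists x; auto.
- by case=> x [[<-|Hx] Hfx]; [rewrite E in Hfx|exists x].
Qed.

Arguments QX {n}. Arguments QC {n} _. Arguments QEq {Sig m n} _ _.
Arguments QUn {Sig m n} _ _. Arguments QBin {Sig m n} _ _ _.
Arguments FVar {n} _. Arguments FCst {n} _. Arguments SVar {Sig m n} _.
Arguments CUn {Sig m n} _ _. Arguments CBin {Sig m n} _ _ _. Arguments CEq {Sig m n} _ _.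

Section Syn.
Variables (Sig : Type) (m : nat) (X : Type) (arX : X -> nat) (n : nat) (G : hgraph arX n).
Notation ke e := (arX (hlab e)).

Definition qdisj k (l : seq (qf Sig m k)) : qf Sig m k :=
  foldr (fun q acc => QNot (QAnd (QNot q) (QNot acc))) qF l.

Definition ncq k : qf Sig m k :=
  foldr (fun c acc => QAnd (QNot (QEq QX (QC c))) acc) qT (enum 'I_k).

Fixpoint tr (e : hE G) (q : qf Sig m n) : qf Sig m (ke e) :=
  match q with
  | QUn a QX => QUn a QX
  | QUn a (QC _) => qF
  | QBin i QX QX => QBin i QX QX
  | QBin i QX (QC c) =>
      qdisj [seq QBin i QX (QC c') | c' <- enum 'I_(ke e) & hinc e c' == hsrc G c]
  | QBin i (QC _) _ => qF
  | QEq QX QX => qT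
  | QEq QX (QC _) => qF
  | QEq (QC _) QX => qF
  | QEq (QC c) (QC c') => if hsrc G c == hsrc G c' then qT else qF
  | QNot q => QNot (tr e q)
  | QAnd q r => QAnd (tr e q) (tr e r)
  end.

Definition ts (e : hE G) (Y : sterm Sig m n) : sterm Sig m (ke e) :=
  match Y with SVar j => SVar j | SCst q => SCst (QAnd (ncq _) (tr e q)) end.

Fixpoint phi (e : hE G) (f : cmso Sig m n) : seq (cmso Sig m (ke e)) :=
  match f with
  | CUn a t => match t with FVar x => [:: CUn a (FVar x)] | _ => [::] end
  | CBin i t u => match t with
      | FVar x => [seq CBin i (FVar x) (FCst c) | c <- enum 'I_(ke e)] ++
                  match u with FVar y => [:: CBin i (FVar x) (FVar y)] | _ => [::] end
      | _ => [::] end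
  | CEq t u => match t, u with FVar x, FVar y => [:: CEq (FVar x) (FVar y)] | _, _ => [::] end
  | CMem t Y => match t with FVar x => [:: CMem (FVar x) (ts e Y)] | _ => [::] end
  | CCard Y _ p => [seq CCard (ts e Y) j p | j <- iota 0 p]
  | CSub Y Z => [:: CSub (ts e Y) (ts e Z)]
  | CSing Y => [:: CSing (ts e Y); CSub (ts e Y) (SCst qF)]
  | CNot g => phi e g
  | CAnd g h => phi e g ++ phi e h
  | CEx1 x g => let Psi := phi e g in
      [seq kill x g' | g' <- Psi] ++
      [seq CEx1 x (CAnd (CMem (FVar x) (SCst (ncq _))) (conjB bs Psi)) | bs <- allbits (size Psi)]
  | CEx2 Y g => let Psi := phi e g in
      [seq CEx2 Y (CAnd (CSub (SVar Y) (SCst (ncq _))) (conjB bs Psi)) | bs <- allbits (size Psi)]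
  end.

Lemma phi_props e (f : cmso Sig m n) :
  forall g, In g (phi e f) ->
  (qrank g <= qrank f)%N /\
  (forall M, moduli_in M f -> moduli_in M g) /\
  (forall b1 b2, closed_in b1 b2 f -> closed_in b1 b2 g).
Proof.
have tsok : forall b (Y : sterm Sig m n), sterm_ok b (ts e Y) = sterm_ok b Y by move=> b [].
elim: f => /=.
- by move=> a [x|c] g //= [<-|//] /=; split => //; split.
- move=> i [x|c] u g //= /in_app_iff [/In_smap [c [_ ->]]|]; first by split => //; split => // b1 b2 /andP[H _]; rewrite /= H.
  case: u => [y|c] //= [<-|//] /=; by split => //; split.
- case=> [x|c] [y|d] g //= [<-|//]; by split => //; split.
- case=> [x|c] Y g //= [<-|//] /=; split => //; split => [M HM|b1 b2 Hc] //; by rewrite tsok.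
- move=> Y k p g /In_smap [j [_ ->]] /=; split => //; split => [M HM|b1 b2 Hc] //; by rewrite tsok.
- move=> Y Z g [<-|//] /=; split => //; split => [M HM|b1 b2 Hc] //; by rewrite !tsok.
- move=> Y g [<-|[<-|//]] /=; (split; [done|split; [done|move=> b1 b2 Hc; by rewrite ?tsok ?Hc]]).
- by [].
- move=> g IHg h IHh g' /in_app_iff [/IHg|/IHh] [H1 [H2 H3]]; split.
  + by rewrite leq_max H1.
  + split=> [M [? ?]|b1 b2 /andP[? ?]]; auto.
  + by rewrite leq_max H1 orbT.
  + split=> [M [? ?]|b1 b2 /andP[? ?]]; auto.
- move=> x g IH g' /in_app_iff [/In_smap [g0 [Hg0 ->]]|/In_smap [bs [_ ->]]].
  + have [H1 [H2 H3]] := IH _ Hg0; have [K1 [K2 K3]] := kill_props x g0.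
    split; first by apply: leq_trans K1 _; apply: leq_trans H1 _.
    by split => [M /H2/K2 //|b1 b2 /H3/K3].
  + split; [|split] => /=.
    * by rewrite ltnS max0n conjB_rank // => g1 /IH [].
    * by move=> M HM; split => //; apply: conjB_mod => g1 /IH [_ [/(_ M HM)]].
    * move=> b1 b2 Hc; rewrite inE eqxx /=; apply: conjB_closed => g1 /IH [_ [_ /(_ _ _ Hc)]] //.
- move=> x g IH g' /In_smap [bs [_ ->]].
  split; [|split] => /=.
  * by rewrite ltnS max0n conjB_rank // => g1 /IH [].
  * by move=> M HM; split => //; apply: conjB_mod => g1 /IH [_ [/(_ M HM)]].
  * move=> b1 b2 Hc; rewrite inE eqxx /=; apply: conjB_closed => g1 /IH [_ [_ /(_ _ _ Hc)]] //.
Qed.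


End Syn.
Arguments ncq {Sig m k}. Arguments qdisj {Sig m k} l.

Lemma In_enum (T : finType) (x : T) : In x (enum T).
Proof. by apply/In_mem; rewrite mem_enum. Qed.

Lemma In_sfilter A (p : pred A) (x : A) (s : seq A) : In x (filter p s) <-> In x s /\ p x.
Proof.
elim: s => [|a s IH] /=; first by split => // -[].
case Hp: (p a) => /=; split.
- by case=> [<-|/IH [? ?]]; auto.
- by case=> [[<-|?] ?]; [left|right; apply/IH].
- by move/IH => [? ?]; auto.
- case=> [[E|?] Hx]; last by apply/IH.
  by subst; rewrite Hp in Hx.
Qed.

Section QSem.
Variables (Sig : Type) (m k : nat) (B : model Sig m k).

Lemma ncq_gen (z : univ B) (s : seq 'I_k) :
  qf_sat z (foldr (fun c acc => QAnd (QNot (QEq QX (QC c))) acc) qT s) <->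
  forall c, In c s -> cst B c <> z.
Proof.
elim: s => [|c s IH] /=; first by split.
rewrite IH; split.
- by move=> [H1 H2] c' [<-|/H2]; [move=> E; apply: H1; rewrite E|].
- move=> H; split; last by move=> c' Hc'; apply: H; right.
  by move=> E; apply: (H c); [left | rewrite E].
Qed.

Lemma ncq_sat (z : univ B) : qf_sat z (@ncq Sig m k) <-> forall c, cst B c <> z.
Proof.
rewrite /ncq ncq_gen; split => H c; last by move=> _; apply: H.
by apply: H; apply: In_enum.
Qed.

Lemma qdisj_sat (z : univ B) l : qf_sat z (qdisj l) <-> exists q, In q l /\ qf_sat z q.
Proof.
elim: l => [|q l IH] /=; first by split => [[]|[? []]]; auto.
split.
- move=> H; case: (excluded_middle_informative (qf_sat z q)) => Hq; first by exists q; auto.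
  case: (excluded_middle_informative (qf_sat z (qdisj l))) => Hl; last by case: H.
  by case/IH: Hl => q' [? ?]; exists q'; auto.
- case=> q' [[<-|Hq'] Hs] [H1 H2]; first by apply: H1.
  by apply: H2; apply/IH; exists q'.
Qed.
End QSem.

Arguments QX {n}. Arguments QC {n} _. Arguments QEq {Sig m n} _ _.
Arguments QUn {Sig m n} _ _. Arguments QBin {Sig m n} _ _ _.
Arguments FVar {n} _. Arguments FCst {n} _. Arguments SVar {Sig m n} _.
Arguments CUn {Sig m n} _ _. Arguments CBin {Sig m n} _ _ _. Arguments CEq {Sig m n} _ _.

Section Comp.
Variables (Sig : Type) (m : nat) (X : Type) (arX : X -> nat) (n : nat) (G : hgraph arX n).
Notation ke e := (arX (hlab e)).
Variable A : forall x : X, model Sig m (arX x).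

Definition Ae (e : hE G) : model Sig m (ke e) := A (hlab e).
Definition nc e (z : univ (Ae e)) : Prop := forall c, cst (Ae e) c <> z.
Definition NC e := {z : univ (Ae e) | nc z}.
Definition U := (hV G + {e : hE G & NC e})%type.

Definition emb e (z : univ (Ae e)) : U :=
  match excluded_middle_informative (exists c, cst (Ae e) c = z) with
  | left H => inl (hinc e (proj1_sig (constructive_indefinite_description _ H)))
  | right H => inr (existT NC e (exist _ z (fun c E => H (ex_intro _ c E))))
  end.
Arguments emb : clear implicits.

Definition curel a (u : U) : Prop :=
  match u with inl _ => False | inr (existT e w) => urel (Ae e) a (sval w) end.
Definition cbrel i (u1 u2 : U) : Prop :=
  match u1 with
  | inl _ => False
  | inr (existT e w) => exists z2, emb e z2 = u2 /\ brel (Ae e) i (sval w) z2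
  end.
Definition cmodel : model Sig m n := @Model Sig m n U curel cbrel (fun c => inl (hsrc G c)).

Definition good := forall x, injective (cst (A x)).

Definition get e e' (w : NC e') : option (univ (Ae e)) :=
  match e' =P e with ReflectT H => Some (sval (eq_rect e' NC w e H)) | ReflectF _ => None end.
Definition getc e (u : U) : option (univ (Ae e)) :=
  match u with inl _ => None | inr (existT e' w) => get e w end.

Definition cenv1 e (r1 : env1 cmodel) : env1 (Ae e) :=
  fun i => match r1 i with Some u => getc e u | None => None end.
Definition cenv2 e (r2 : env2 cmodel) : env2 (Ae e) :=
  fun j z => nc z /\ r2 j (emb e z).
Arguments cenv1 : clear implicits. Arguments cenv2 : clear implicits. Arguments getc : clear implicits.

Lemma get_same e (w : NC e) : get e w = Some (sval w).
Proof. rewrite /get; case: eqP => // H; by rewrite (eq_irrelevance H erefl). Qed.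
Lemma get_diff e e' (w : NC e') : e' <> e -> get e w = None.
Proof. by rewrite /get; case: eqP. Qed.
Lemma get_inv e e' (w : NC e') z : get e w = Some z ->
  exists w' : NC e, existT NC e' w = existT NC e w' /\ sval w' = z.
Proof.
rewrite /get; case: eqP => // H [<-]; subst e'; exists w; split => //.
Qed.

Lemma sigT_inj e (w w' : NC e) : existT NC e w = existT NC e w' -> w = w'.
Proof. apply: inj_pair2_eq_dec => x y; exact: (decP (x =P y)). Qed.

Lemma NC_eq e (w w' : NC e) : sval w = sval w' -> w = w'.
Proof. case: w w' => [z p] [z' p'] /= E; subst z'; by rewrite (proof_irrelevance _ p p'). Qed.

Lemma emb_nc e (w : NC e) : emb e (sval w) = inr (existT NC e w).
Proof.
rewrite /emb; case: excluded_middle_informative => [[c Hc]|H].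
  by exfalso; exact: (svalP w c Hc).
by congr (inr (existT _ _ _)); apply: NC_eq.
Qed.

Lemma emb_cst (gA : good) e c : emb e (cst (Ae e) c) = inl (hinc e c).
Proof.
rewrite /emb; case: excluded_middle_informative => [H|H]; last by case: H; exists c.
case: constructive_indefinite_description => c' /= Hc'.
by rewrite (gA _ _ _ Hc').
Qed.

Lemma emb_cases e z : (exists c, z = cst (Ae e) c) \/ (exists w : NC e, z = sval w).
Proof.
case: (excluded_middle_informative (exists c, cst (Ae e) c = z)) => [[c Hc]|H].
  by left; exists c.
by right; exists (exist _ z (fun c E => H (ex_intro _ c E))).
Qed.

Lemma emb_inl (gA : good) e z v : emb e z = inl v <-> exists c, z = cst (Ae e) c /\ hinc e c = v.
Proof.
case: (emb_cases z) => [[c ->]|[w ->]]; rewrite ?(emb_cst gA) ?emb_nc.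
- split => [[<-]|[c' [E1 <-]]]; first by exists c.
  by move: (gA (hlab e) c c' E1) => ->.
- split => // [[c [E _]]]; exfalso; exact: (svalP w c (esym E)).
Qed.


Lemma emb_inr_same e z (w : NC e) : emb e z = inr (existT NC e w) -> z = sval w.
Proof.
case: (emb_cases z) => [[c ->]|[w' ->]]; last by rewrite emb_nc => -[/sigT_inj ->].
rewrite /emb; case: excluded_middle_informative => [//|H]; by case: H; exists c.
Qed.

Lemma emb_inr_tag e z e' (w : NC e') : emb e z = inr (existT NC e' w) -> e = e'.
Proof.
rewrite /emb; case: excluded_middle_informative => // H E.
have := f_equal (fun u : U => match u with inr p => projT1 p | inl _ => e end) E; by [].
Qed.

Lemma cenv1_inr (r1 : env1 cmodel) i e (w : NC e) :
  r1 i = Some (inr (existT NC e w)) -> cenv1 e r1 i = Some (sval w).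
Proof. by rewrite /cenv1 => ->; rewrite /= get_same. Qed.
Lemma cenv1_inr_ne (r1 : env1 cmodel) i e e' (w : NC e') :
  r1 i = Some (inr (existT NC e' w)) -> e' <> e -> cenv1 e r1 i = None.
Proof. by rewrite /cenv1 => -> /= /get_diff ->. Qed.
Lemma cenv1_inl (r1 : env1 cmodel) i e v :
  r1 i = Some (inl v) -> cenv1 e r1 i = None.
Proof. by rewrite /cenv1 => ->. Qed.
Lemma cenv1_inv (r1 : env1 cmodel) i e z : cenv1 e r1 i = Some z ->
  exists w : NC e, r1 i = Some (inr (existT NC e w)) /\ sval w = z.
Proof.
rewrite /cenv1; case: (r1 i) => // -[//|[e' w]] /= /get_inv [w' [E <-]].
by exists w'; rewrite E.
Qed.

Definition gterm (v : hV G) (t : qterm n) : hV G :=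
  match t with QX => v | QC c => hsrc G c end.
Fixpoint gsat (q : qf Sig m n) (v : hV G) : Prop :=
  match q with
  | QUn _ _ => False | QBin _ _ _ => False
  | QEq t u => gterm v t = gterm v u
  | QNot q => ~ gsat q v
  | QAnd q r => gsat q v /\ gsat r v
  end.

Lemma qf_G q v : qf_sat (A:=cmodel) (inl v) q <-> gsat q v.
Proof.
elim: q => /=.
- by move=> a [|c].
- by move=> i [|c] [|d].
- move=> [|c] [|d] /=; split => [E|E]; rewrite ?E //;
  exact: (f_equal (fun u : U => if u is inl x then x else v) E).
- by move=> q IH /=; split => H1 H2; apply: H1; apply IH.
- by move=> q IHq r IHr /=; split => -[H1 H2]; split; first [apply IHq | apply IHr]; assumption.
Qed.

Lemma tr_sat (gA : good) e q (w : NC e) :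
  qf_sat (A:=Ae e) (sval w) (tr e q) <-> qf_sat (A:=cmodel) (inr (existT NC e w)) q.
Proof.
elim: q => /=.
- by move=> a [|c] //=; split => // -[].
- move=> i [|c] [|d] /=; try by split => // -[].
  + split => [H|[z2 [/emb_inr_same -> //]]]; by exists (sval w); rewrite emb_nc.
  + rewrite qdisj_sat; split.
    * case=> q [/In_smap [c' [/In_sfilter [_ /eqP Hc'] ->]]] /= Hb.
      by exists (cst (Ae e) c'); rewrite (emb_cst gA) Hc'.
    * case=> z2 [/(emb_inl gA) [c' [-> Hc']] Hb].
      exists (QBin i QX (QC c')); split => //; apply/In_smap; exists c'; split => //.
      by apply/In_sfilter; split; [apply: In_enum | apply/eqP].
- move=> [|c] [|d] /=.
  + by split.
  + by split => [H|E]; [case: H | discriminate].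
  + by split => [H|E]; [case: H | discriminate].
  + case: eqP => [->|H] /=; first by split.
    split => [H'|E]; first by case: H'.
    by case: H; exact: (f_equal (fun u : U => if u is inl x then x else hsrc G c) E).
- by move=> q IH /=; split => H1 H2; apply: H1; apply IH.
- by move=> q IHq r IHr /=; split => -[H1 H2]; split; first [apply IHq | apply IHr]; assumption.
Qed.

Lemma ts_sat (gA : good) e (r2 : env2 cmodel) Y z :
  sterm_val (A:=Ae e) (cenv2 e r2) (ts e Y) z <-> nc z /\ sterm_val (A:=cmodel) r2 Y (emb e z).
Proof.
case: Y => [j|q] //=; rewrite ncq_sat; split.
- move=> [H1 H2]; split => //; by rewrite -[z]/(sval (exist _ z H1 : NC e)) emb_nc -tr_sat.
- move=> [H1 H2]; split => //; move: H2.
  by rewrite -[z]/(sval (exist _ z H1 : NC e)) emb_nc -tr_sat.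
Qed.

Definition Pe e (P : U -> Prop) : univ (Ae e) -> Prop := fun z => nc z /\ P (emb e z).
Arguments Pe : clear implicits.
Definition SG (P : U -> Prop) : {set hV G} := [set v | pb (P (inl v))].

Lemma emb_inj_nc e z1 z2 : nc z1 -> nc z2 -> emb e z1 = emb e z2 -> z1 = z2.
Proof.
move=> H1 H2.
rewrite -[z1]/(sval (exist _ z1 H1 : NC e)) -[z2]/(sval (exist _ z2 H2 : NC e)) !emb_nc => E.
have E' : existT NC e (exist _ z1 H1) = existT NC e (exist _ z2 H2) :=
  f_equal (fun u : U => if u is inr p then p else existT NC e (exist _ z1 H1)) E.
exact: (f_equal (@sval _ _) (sigT_inj E')).
Qed.

Lemma card_build P (Ns : hE G -> nat) : (forall e, fin_card (Pe e P) (Ns e)) ->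
  fin_card P (#|SG P| + \sum_e Ns e).
Proof.
move=> HN.
have HG : fin_card (fun u : U => exists v, P (inl v) /\ u = inl v) #|SG P|.
  apply: (@fin_card_image _ _ (fun v => P (inl v)) inl) => [x y _ _ [] //|].
  exists (enum (SG P)); split; [|split].
  - exact/uniq_NoDup/enum_uniq.
  - by move=> v; rewrite In_mem mem_enum inE; split => [H|/pbP //]; apply/pbP.
  - by rewrite cardE.
pose Q (es : seq (hE G)) (u : U) := exists e, e \in es /\ exists w : NC e, u = inr (existT NC e w) /\ P u.
have HQ : forall es, uniq es -> fin_card (Q es) (\sum_(e <- es) Ns e).
  elim=> [|e es IH] /=.
    by move=> _; rewrite big_nil; apply: (@fin_card_ext _ (fun _ : U => False) _ _ _ (@fin_card0 U)) => u; split => // -[e []].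
  case/andP => Hnin Hu; rewrite big_cons.
  have He : fin_card (fun u => exists z, Pe e P z /\ u = emb e z) (Ns e).
    by apply: (@fin_card_image _ _ (Pe e P) (emb e)) (HN e) => x y [Hx _] [Hy _]; apply: emb_inj_nc.
  apply: fin_card_ext (fin_card_union _ He (IH Hu)).
  - move=> u; split.
    + case=> [[z [[Hz Pz] ->]]|[e' [He' [w [-> Pu]]]]].
      * exists e; rewrite inE eqxx; split => //; exists (exist _ z Hz).
        by rewrite -emb_nc.
      * by exists e'; rewrite inE He' orbT; split => //; exists w.
    + case=> e' [He' [w [Eu Pu]]]; move: He'; rewrite inE => /orP[/eqP Ee|He'].
      * subst e'; left; exists (sval w); split; last by rewrite emb_nc.
        by split; [exact: svalP | rewrite emb_nc -Eu].
      * by right; exists e'; split => //; exists w.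
  - move=> u [z [[Hz _] ->]] [e' [He' [w []]]].
    rewrite -[z]/(sval (exist _ z Hz : NC e)) emb_nc => E _.
    have Ee : e = e' by exact: (f_equal (fun u : U => if u is inr p then projT1 p else e) E).
    by subst e'; rewrite He' in Hnin.
have HQ' := HQ _ (index_enum_uniq (hE G)).
apply: fin_card_ext (fin_card_union _ HG HQ').
- move=> u; split.
  + by case=> [[v [Pv ->]]|[e [_ [w [_ Pu]]]]].
  + case: u => [v|[e w]] Pu; first by left; exists v.
    by right; exists e; split; [exact: mem_index_enum | exists w].
- by move=> u [v [_ ->]] [e [_ [w []]]].
Qed.

Lemma card_split P N : fin_card P N ->
  exists Ns : hE G -> nat, (forall e, fin_card (Pe e P) (Ns e)) /\ N = #|SG P| + \sum_e Ns e.
Proof.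
move=> HP.
have HF : forall e, exists N', fin_card (Pe e P) N'.
  move=> e; case: HP => l [_ [Hl _]].
  have Hc : forall z, Pe e P z -> In z (pmap (getc e) l).
    move=> z [Hz Pz]; apply/In_pmap; exists (emb e z); split; first by apply/Hl.
    by rewrite -[z]/(sval (exist _ z Hz : NC e)) emb_nc /= get_same.
  have [l' [N' H']] := cover_exact Hc.
  by exists (length l'); exists l'.
pose Ns e := proj1_sig (constructive_indefinite_description _ (HF e)).
have HNs : forall e, fin_card (Pe e P) (Ns e).
  by move=> e; rewrite /Ns; case: constructive_indefinite_description.
exists Ns; split => //; apply: fin_card_uniq HP _; exact: card_build.
Qed.

Lemma card_comp (P : U -> Prop) k p :
  card_mod (A:=cmodel) P k p <->
  exists ks : hE G -> nat, (forall e, card_mod (A:=Ae e) (Pe e P) (ks e) p) /\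
    #|SG P| + \sum_e ks e = k %[mod p].
Proof.
split.
- case=> l [N1 [H1 H2]].
  have [Ns [HNs EN]] := @card_split P (length l) (ex_intro _ l (conj N1 (conj H1 erefl))).
  exists Ns; split; last by rewrite -EN.
  move=> e; case: (HNs e) => l' [? [? E]]; exists l'; split => //; split => //; by rewrite E.
- case=> ks [Hks Ek].
  have HF : forall e, exists N', fin_card (Pe e P) N' /\ N' = ks e %[mod p].
    move=> e; case: (Hks e) => l' [? [? E]]; exists (length l'); split => //; by exists l'.
  pose Ns e := proj1_sig (constructive_indefinite_description _ (HF e)).
  have HNs : forall e, fin_card (Pe e P) (Ns e) /\ Ns e = ks e %[mod p].
    by move=> e; rewrite /Ns; case: constructive_indefinite_description.
  have [l [N1 [H1 E1]]] := card_build (fun e => proj1 (HNs e)).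
  have Es : \sum_e Ns e = \sum_e ks e %[mod p].
    rewrite -(modn_summ _ _ Ns) -(modn_summ _ _ ks); congr (_ %% p); apply: eq_bigr => e _.
    exact: (proj2 (HNs e)).
  exists l; split => //; split => //; by rewrite E1 -Ek -modnDmr Es modnDmr.
Qed.

End Comp.

Arguments QX {n}. Arguments QC {n} _. Arguments QEq {Sig m n} _ _.
Arguments QUn {Sig m n} _ _. Arguments QBin {Sig m n} _ _ _.
Arguments FVar {n} _. Arguments FCst {n} _. Arguments SVar {Sig m n} _.
Arguments CUn {Sig m n} _ _. Arguments CBin {Sig m n} _ _ _. Arguments CEq {Sig m n} _ _.
Arguments Pe {Sig m X arX n G A} e P _.
Arguments emb {Sig m X arX n G A} e z.
Arguments cenv2 {Sig m X arX n G A} e r2 _ _.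

Lemma pb_iff (P Q : Prop) : (P <-> Q) -> pb P = pb Q.
Proof. by move=> H; rewrite (propositional_extensionality _ _ H). Qed.

Section Main.
Variables (Sig : Type) (m : nat) (X : Type) (arX : X -> nat) (n : nat) (G : hgraph arX n).
Notation Fam := (forall x : X, model Sig m (arX x)).

Definition loc (A : Fam) (o : option (U G A)) : option (hV G + hE G) :=
  omap (fun u => match u with inl v => inl v | inr p => inr (projT1 p) end) o.

Definition skel (A B : Fam) (r1 : env1 (cmodel G A)) (r2 : env2 (cmodel G A))
    (r1' : env1 (cmodel G B)) (r2' : env2 (cmodel G B)) :=
  (forall i, loc (r1 i) = loc (r1' i)) /\ (forall j v, r2 j (inl v) <-> r2' j (inl v)).

Definition agree (A B : Fam) (r1 : env1 (cmodel G A)) (r2 : env2 (cmodel G A))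
    (r1' : env1 (cmodel G B)) (r2' : env2 (cmodel G B)) (f : cmso Sig m n) :=
  forall e g, In g (phi e f) ->
    (sat (cenv1 e r1) (cenv2 e r2) g <-> sat (cenv1 e r1') (cenv2 e r2') g).

Lemma skel_sym A B r1 r2 r1' r2' : @skel A B r1 r2 r1' r2' -> skel r1' r2' r1 r2.
Proof. by case=> H1 H2; split => [i|j v]; rewrite ?H1 ?H2. Qed.

Lemma agree_sym A B r1 r2 r1' r2' f : @agree A B r1 r2 r1' r2' f -> agree r1' r2' r1 r2 f.
Proof. by move=> H e g Hg; rewrite H. Qed.

Lemma loc_inl A (o : option (U G A)) v : loc o = Some (inl v) -> o = Some (inl v).
Proof. by case: o => [[v'|[e w]]|] //= [->]. Qed.

Lemma loc_inr A (o : option (U G A)) e : loc o = Some (inr e) ->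
  exists w : NC A e, o = Some (inr (existT _ e w)).
Proof. by case: o => [[v'|[e' w]]|] //= [<-]; exists w. Qed.

Lemma fval_inl A B r1 r2 r1' r2' (S : @skel A B r1 r2 r1' r2') t v :
  fterm_val r1 t = Some (inl v) -> fterm_val r1' t = Some (inl v).
Proof.
case: S => S1 _; case: t => [i|c] /= E; last by case: E => <-.
have := S1 i; rewrite E => /esym; exact: loc_inl.
Qed.

Lemma YG A B r1 r2 r1' r2' (S : @skel A B r1 r2 r1' r2') Y v :
  sterm_val r2 Y (inl v) <-> sterm_val r2' Y (inl v).
Proof. case: S => _ S2; case: Y => [j|q] /=; first exact: S2. by rewrite !qf_G. Qed.

Lemma SG_eq A B r1 r2 r1' r2' (S : @skel A B r1 r2 r1' r2') Y :
  SG (sterm_val r2 Y) = SG (sterm_val r2' Y).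
Proof. by apply/setP => v; rewrite !inE; apply: pb_iff; apply: YG S Y v. Qed.

Lemma card_mod_ext Sig' m' n' (M : model Sig' m' n') (P Q : univ M -> Prop) k p :
  (forall z, P z <-> Q z) -> card_mod P k p -> card_mod Q k p.
Proof. move=> H [l [H1 [H2 H3]]]; exists l; split => //; split => // z; rewrite -H2; split; apply H. Qed.

Lemma card_mod_mod Sig' m' n' (M : model Sig' m' n') (P : univ M -> Prop) k p :
  card_mod P k p <-> card_mod P (k %% p) p.
Proof. by split => -[l [H1 [H2 H3]]]; exists l; split => //; split => //; rewrite H3 modn_mod. Qed.

Lemma inr_eq (A : Fam) e (w w' : NC A e) :
  (inr (existT _ e w) : U G A) = inr (existT _ e w') <-> w = w'.
Proof.
split => [E|->] //; apply: sigT_inj.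
exact: (f_equal (fun u : U G A => if u is inr p then p else existT _ e w) E).
Qed.

Lemma inr_tag (A : Fam) e e' (w : NC A e) (w' : NC A e') :
  (inr (existT _ e w) : U G A) = inr (existT _ e' w') -> e = e'.
Proof. move=> E; exact: (f_equal (fun u : U G A => if u is inr p then projT1 p else e) E). Qed.

Lemma cenv1_upd_inl (A : Fam) e (r1 : env1 (cmodel G A)) x v :
  cenv1 e (fun i => if i == x then Some (inl v) else r1 i) =
  (fun i => if i == x then None else cenv1 e r1 i).
Proof. apply: functional_extensionality => i; rewrite /cenv1; by case: (i == x). Qed.

Lemma cenv1_upd_ne (A : Fam) e e' (w : NC A e') (r1 : env1 (cmodel G A)) x : e' <> e ->
  cenv1 e (fun i => if i == x then Some (inr (existT _ e' w)) else r1 i) =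
  (fun i => if i == x then None else cenv1 e r1 i).
Proof.
move=> Ne; apply: functional_extensionality => i; rewrite /cenv1; case: (i == x) => //=.
exact: get_diff.
Qed.

Lemma cenv1_upd_same (A : Fam) e (w : NC A e) (r1 : env1 (cmodel G A)) x :
  cenv1 e (fun i => if i == x then Some (inr (existT _ e w)) else r1 i) =
  (fun i => if i == x then Some (sval w) else cenv1 e r1 i).
Proof.
apply: functional_extensionality => i; rewrite /cenv1; case: (i == x) => //=.
exact: get_same.
Qed.

Lemma agree_kill (A B : Fam) r1 r2 r1' r2' x g e :
  @agree A B r1 r2 r1' r2' (CEx1 x g) ->
  forall g', In g' (phi e g) ->
  (sat (fun i => if i == x then None else cenv1 e r1 i) (cenv2 e r2) g' <->
   sat (fun i => if i == x then None else cenv1 e r1' i) (cenv2 e r2') g').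
Proof.
move=> Ag g' Hg'; rewrite -!kill_sat; apply: Ag; rewrite /=; apply/In_cat; left.
by apply/In_smap; exists g'.
Qed.

Lemma main (f : cmso Sig m n) : moduli_in (fun _ => True) f ->
  forall (A B : Fam), good A -> good B ->
  forall r1 r2 r1' r2', skel r1 r2 r1' r2' -> agree r1 r2 r1' r2' f ->
  sat (A:=cmodel G A) r1 r2 f -> sat (A:=cmodel G B) r1' r2' f.
Proof.
elim: f.
-
  move=> a t _ A B gA gB r1 r2 r1' r2' S Ag [[v|[e w]] [Et Hu]] //=.
  case: t Et Ag => [x|c] //= Et Ag.
  have : sat (cenv1 e r1) (cenv2 e r2) (CUn a (FVar x)).
    by exists (sval w); rewrite /= (cenv1_inr Et).
  move/(Ag e _ (or_introl erefl)) => [z' [/cenv1_inv [w' [E' <-]] Hz']].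
  by exists (inr (existT _ e w')).
-
  move=> i t u _ A B gA gB r1 r2 r1' r2' S Ag [[v|[e w]] [z2 [Et [Eu Hb]]]] //=.
  case: Hb => z2' [Ez2 Hb].
  case: t Et Ag => [x|c] //= Et Ag.
  case: (emb_cases z2') => [[c Ec]|[w2 Ec]]; subst z2'.
  + rewrite (emb_cst gA) in Ez2; subst z2.
    have Hin : @In (cmso Sig m (arX (hlab e))) (CBin i (FVar x) (FCst c)) (phi e (CBin i (FVar x) u)).
      by rewrite /=; apply/In_cat; left; apply/In_smap; exists c; split => //; apply: In_enum.
    have : sat (cenv1 e r1) (cenv2 e r2) (CBin i (FVar x) (FCst c)).
      by exists (sval w), (cst (Ae A e) c); rewrite /= (cenv1_inr Et).
    move/(Ag e _ Hin) => [z1' [z2'' [/cenv1_inv [w1' [E1 <-]] [/= [<-] Hb']]]].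
    exists (inr (existT _ e w1')), (inl (hinc e c)); split => //; split.
      exact: (fval_inl S Eu).
    by exists (cst (Ae B e) c); rewrite (emb_cst gB).
  + rewrite emb_nc in Ez2; subst z2.
    case: u Eu Ag => [y|c] //= Eu Ag.
    have Hin : @In (cmso Sig m (arX (hlab e))) (CBin i (FVar x) (FVar y)) (phi e (CBin i (FVar x) (FVar y))).
      by rewrite /=; apply/In_cat; right; left.
    have : sat (cenv1 e r1) (cenv2 e r2) (CBin i (FVar x) (FVar y)).
      by exists (sval w), (sval w2); rewrite /= (cenv1_inr Et) (cenv1_inr Eu).
    move/(Ag e _ Hin) => [z1' [z2'' [/cenv1_inv [w1' [E1 <-]] [/cenv1_inv [w2' [E2 <-]] Hb']]]].
    exists (inr (existT _ e w1')), (inr (existT _ e w2')); split => //; split => //.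
    by exists (sval w2'); rewrite emb_nc.
-
  move=> t u _ A B gA gB r1 r2 r1' r2' S Ag [[v|[e w]] [Et Eu]].
    by exists (inl v); split; [exact: (fval_inl S Et) | exact: (fval_inl S Eu)].
  case: t Et Ag => [x|c] //= Et; case: u Eu => [y|d] //= Eu Ag.
  have : sat (cenv1 e r1) (cenv2 e r2) (CEq (FVar x) (FVar y)).
    by exists (sval w); rewrite /= (cenv1_inr Et) (cenv1_inr Eu).
  move/(Ag e _ (or_introl erefl)) => [z' [/cenv1_inv [w1 [E1 <-]] /cenv1_inv [w2 [E2 E12]]]].
  move/NC_eq: E12 => E12; subst w2.
  by exists (inr (existT _ e w1)).
-
  move=> t Y _ A B gA gB r1 r2 r1' r2' S Ag [[v|[e w]] [Et HY]].
    by exists (inl v); split; [exact: (fval_inl S Et) | apply/(YG S)].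
  case: t Et Ag => [x|c] //= Et Ag.
  have : sat (cenv1 e r1) (cenv2 e r2) (CMem (FVar x) (ts e Y)).
    exists (sval w); rewrite /= (cenv1_inr Et); split => //.
    by apply/(ts_sat gA); rewrite emb_nc; split => //; exact: (svalP w).
  move/(Ag e _ (or_introl erefl)) => [z' [/cenv1_inv [w1 [E1 <-]] /(ts_sat gB) [_]]].
  by rewrite emb_nc => H; exists (inr (existT _ e w1)).
-
  move=> Y k p [_ Hp] A B gA gB r1 r2 r1' r2' S Ag /= /card_comp [ks [Hks Ek]].
  apply/card_comp; exists (fun e => ks e %% p); split.
  + move=> e.
    have Hin : @In (cmso Sig m (arX (hlab e))) (CCard (ts e Y) (ks e %% p) p) (phi e (CCard Y k p)).
      rewrite /=; apply/In_smap; exists (ks e %% p); split => //.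
      by apply/In_mem; rewrite mem_iota add0n ltn_pmod.
    have : sat (cenv1 e r1) (cenv2 e r2) (CCard (ts e Y) (ks e %% p) p).
      rewrite /= -card_mod_mod; apply: card_mod_ext (Hks e) => z.
      by rewrite (ts_sat gA).
    move/(Ag e _ Hin) => /= H; apply: card_mod_ext H => z; by rewrite (ts_sat gB).
  + rewrite -(SG_eq S) -Ek -modnDmr -[in RHS]modnDmr; congr ((_ + _) %% p).
    by rewrite -(modn_summ _ _ ks).
-
  move=> Y Z _ A B gA gB r1 r2 r1' r2' S Ag /= HA.
  have : forall e, sat (cenv1 e r1') (cenv2 e r2') (CSub (ts e Y) (ts e Z)).
    move=> e; apply/(Ag e _ (or_introl erefl)) => z /=.
    by rewrite !(ts_sat gA) => -[Hz /HA]; split.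
  move=> HB [v|[e w]].
    by move/(YG S) => /HA /(YG S).
  have := HB e (sval w); rewrite /= !(ts_sat gB) emb_nc => H Hy.
  by case: (H (conj (svalP w) Hy)).
-
  move=> Y _ A B gA gB r1 r2 r1' r2' S Ag /= [u Hu].
  have Hin2 : forall e : hE G, @In (cmso Sig m (arX (hlab e))) (CSub (ts e Y) (SCst qF)) (phi e (CSing Y)).
    by move=> e; right; left.
  have Hin1 : forall e : hE G, @In (cmso Sig m (arX (hlab e))) (CSing (ts e Y)) (phi e (CSing Y)).
    by move=> e; left.
  have Empty : forall e : hE G, (forall z : univ (Ae A e), nc z -> sterm_val r2 Y (emb e z) -> False) ->
      forall w : NC B e, ~ sterm_val r2' Y (inr (existT _ e w)).
    move=> e H w Hw.
    have : sat (cenv1 e r1) (cenv2 e r2) (CSub (ts e Y) (SCst qF)).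
      by move=> z /=; rewrite (ts_sat gA) => -[Hz /(H z Hz)].
    move/(Ag e _ (Hin2 e)) => /(_ (sval w)) /=; rewrite (ts_sat gB) emb_nc.
    by move=> /(_ (conj (svalP w) Hw)) [].
  case: u Hu => [v|[e w]] Hu.
  + exists (inl v) => -[v'|[e' w']].
    * rewrite -(YG S) Hu; split => [[->]|[->]] //.
    * split => // Hw; case: (Empty e' _ w' Hw) => z Hz.
      by rewrite -[z]/(sval (exist _ z Hz : NC A e')) emb_nc => /Hu.
  + have : sat (cenv1 e r1) (cenv2 e r2) (CSing (ts e Y)).
      exists (sval w) => z /=; rewrite (ts_sat gA); split.
      * by case=> Hz /Hu; rewrite -[z]/(sval (exist _ z Hz : NC A e)) emb_nc => /inr_eq ->.
      * by move=> ->; rewrite emb_nc; split; [exact: svalP | apply/Hu].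
    move/(Ag e _ (Hin1 e)) => /= [z0 Hz0].
    have [Hnc _] : nc z0 /\ sterm_val r2' Y (emb e z0) by rewrite -(ts_sat gB); apply/Hz0.
    exists (inr (existT _ e (exist _ z0 Hnc))) => -[v'|[e' w']].
    * rewrite -(YG S) Hu; split => // E; discriminate.
    * case: (eqVneq e' e) => [Ee|Ne].
      - subst e'; rewrite inr_eq; split.
        + move=> Hw; apply: NC_eq => /=; apply/(Hz0 (sval w')).
          by rewrite (ts_sat gB) emb_nc; split => //; exact: (svalP w').
        + move=> ->; have := proj2 (Hz0 z0) erefl; rewrite (ts_sat gB).
          by rewrite -[z0]/(sval (exist _ z0 Hnc : NC B e)) emb_nc => -[].
      - split => [Hw|/inr_tag E]; last by rewrite E eqxx in Ne.
        case: (Empty e' _ w' Hw) => z Hz.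
        rewrite -[z]/(sval (exist _ z Hz : NC A e')) emb_nc => /Hu /inr_tag E.
        by rewrite E eqxx in Ne.
-
  move=> g IH HM A B gA gB r1 r2 r1' r2' S Ag /= HnA HB; apply: HnA.
  exact: (IH HM B A gB gA r1' r2' r1 r2 (skel_sym S) (agree_sym Ag) HB).
-
  move=> g IHg h IHh [Mg Mh] A B gA gB r1 r2 r1' r2' S Ag [Hg Hh]; split.
  + apply: (IHg Mg A B gA gB r1 r2 r1' r2' S _ Hg) => e g' H; apply: Ag.
    by rewrite /=; apply/In_cat; left.
  + apply: (IHh Mh A B gA gB r1 r2 r1' r2' S _ Hh) => e g' H; apply: Ag.
    by rewrite /=; apply/In_cat; right.
-
  move=> x g IH HM A B gA gB r1 r2 r1' r2' [S1 S2] Ag [u Hu].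
  case: u Hu => [v|[e0 w]] Hu.
  + exists (inl v); apply: (IH HM A B gA gB _ r2 _ r2' _ _ Hu).
      split => // i; case: (i == x) => //; exact: S1.
    move=> e g' Hg'; rewrite !cenv1_upd_inl; exact: agree_kill Ag g' Hg'.
  + pose envA := (fun i => if i == x then Some (sval w) else cenv1 e0 r1 i).
    pose bs := bitsOf envA (cenv2 e0 r2) (phi e0 g).
    have Hin : @In (cmso Sig m (arX (hlab e0)))
       (CEx1 x (CAnd (CMem (FVar x) (SCst ncq)) (conjB bs (phi e0 g)))) (phi e0 (CEx1 x g)).
      rewrite /=; apply/In_cat; right; apply/In_smap; exists bs; split => //.
      by rewrite -(size_bitsOf envA (cenv2 e0 r2) (phi e0 g)); apply: allbitsP.
    have : sat (cenv1 e0 r1) (cenv2 e0 r2)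
       (CEx1 x (CAnd (CMem (FVar x) (SCst ncq)) (conjB bs (phi e0 g)))).
      exists (sval w); split; last exact: conjB_self.
      exists (sval w); rewrite /= eqxx; split => //; apply/(@ncq_sat _ _ _ (Ae A e0)); exact: (svalP w).
    move/(Ag e0 _ Hin) => [z' [[z [/= E Hz]] HB]].
    rewrite eqxx in E; case: E => E; subst z.
    move/ncq_sat: Hz => Hnc.
    exists (inr (existT _ e0 (exist _ z' Hnc))); apply: (IH HM A B gA gB _ r2 _ r2' _ _ Hu).
      split => // i; case: (i == x) => //; exact: S1.
    move=> e g' Hg'; case: (eqVneq e e0) => [Ee|Ne].
    * subst e; rewrite !cenv1_upd_same /=; exact: conjB_agree HB g' Hg'.
    * rewrite !cenv1_upd_ne; [exact: agree_kill Ag g' Hg'| |]; by apply/eqP; rewrite eq_sym.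
-
  move=> Y g IH HM A B gA gB r1 r2 r1' r2' [S1 S2] Ag [Z HZ].
  have Hc2 : forall (C : Fam) (r2 : env2 (cmodel G C)) e (Z : U G C -> Prop),
      cenv2 e (fun j => if j == Y then Z else r2 j) =
      (fun j => if j == Y then Pe e Z else cenv2 e r2 j).
    move=> C r e Z'; apply: functional_extensionality => j; apply: functional_extensionality => z.
    by rewrite /cenv2; case: (j == Y).
  have HB : forall e, exists Z' : univ (Ae B e) -> Prop, (forall z, Z' z -> nc z) /\
      forall g', In g' (phi e g) ->
      (sat (cenv1 e r1) (fun j => if j == Y then Pe e Z else cenv2 e r2 j) g' <->
       sat (cenv1 e r1') (fun j => if j == Y then Z' else cenv2 e r2' j) g').
    move=> e.
    pose bs := bitsOf (cenv1 e r1) (fun j => if j == Y then Pe e Z else cenv2 e r2 j) (phi e g).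
    have Hin : @In (cmso Sig m (arX (hlab e)))
       (CEx2 Y (CAnd (CSub (SVar Y) (SCst ncq)) (conjB bs (phi e g)))) (phi e (CEx2 Y g)).
      rewrite /=; apply/In_smap; exists bs; split => //.
      by rewrite -(size_bitsOf (cenv1 e r1) (fun j => if j == Y then Pe e Z else cenv2 e r2 j) (phi e g)); apply: allbitsP.
    have : sat (cenv1 e r1) (cenv2 e r2)
       (CEx2 Y (CAnd (CSub (SVar Y) (SCst ncq)) (conjB bs (phi e g)))).
      exists (Pe e Z); split; last exact: conjB_self.
      by move=> z /=; rewrite eqxx => -[Hz _]; apply/ncq_sat.
    move/(Ag e _ Hin) => [Z' [HZ' HB]]; exists Z'; split.
      by move=> z Hz; apply/ncq_sat; apply: HZ'; rewrite /= eqxx.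
    exact: conjB_agree HB.
  pose Zs e := proj1_sig (constructive_indefinite_description _ (HB e)).
  have HZs : forall e, (forall z, Zs e z -> nc z) /\ forall g', In g' (phi e g) ->
      (sat (cenv1 e r1) (fun j => if j == Y then Pe e Z else cenv2 e r2 j) g' <->
       sat (cenv1 e r1') (fun j => if j == Y then Zs e else cenv2 e r2' j) g').
    by move=> e; rewrite /Zs; case: constructive_indefinite_description.
  pose Z' (u : U G B) : Prop := match u with inl v => Z (inl v) | inr (existT e w) => Zs e (sval w) end.
  have PeZ' : forall e, Pe e Z' = Zs e.
    move=> e; apply: functional_extensionality => z; apply: propositional_extensionality.
    rewrite /Pe; split.
    * by case=> Hz; rewrite -[z]/(sval (exist _ z Hz : NC B e)) emb_nc.
    * move=> Hz; have Hnc := (HZs e).1 z Hz; split => //.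
      by rewrite -[z]/(sval (exist _ z Hnc : NC B e)) emb_nc.
  exists Z'; apply: (IH HM A B gA gB r1 _ r1' _ _ _ HZ).
    split => // j v; case: (j == Y) => //; exact: S2.
  move=> e g' Hg'; rewrite !Hc2 PeZ'; exact: (HZs e).2.
Qed.

End Main.

Arguments QX {n}. Arguments QC {n} _. Arguments QEq {Sig m n} _ _.
Arguments QUn {Sig m n} _ _. Arguments QBin {Sig m n} _ _ _.
Arguments FVar {n} _. Arguments FCst {n} _. Arguments SVar {Sig m n} _.
Arguments CUn {Sig m n} _ _. Arguments CBin {Sig m n} _ _ _. Arguments CEq {Sig m n} _ _.
Arguments Pe {Sig m X arX n G A} e P _.
Arguments emb {Sig m X arX n G A} e z.
Arguments cenv2 {Sig m X arX n G A} e r2 _ _.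

Lemma resolve_cases (S : Type) (arS : S -> nat) k (H : hgraph arS k) (v : hV H) :
  (exists i, resolve v = inl i /\ hsrc H i = v) \/
  (exists P, resolve v = inr (exist _ v P) /\ [pick i | hsrc H i == v] = None).
Proof.
rewrite /resolve.
set Q := fun x : 'I_k + {w : hV H | nonsrc w} => (exists i, x = inl i /\ hsrc H i = v) \/
  (exists P, x = inr (exist _ v P) /\ [pick i | hsrc H i == v] = None).
suff : forall o (E : [pick i | hsrc H i == v] = o),
  Q (match o as o0 return ([pick i | hsrc H i == v] = o0 -> 'I_k + {w : hV H | nonsrc w}) with
     | Some i => fun _ => inl i
     | None => fun h => inr (exist _ v (pick_none_nonsrc h)) end E) by apply.
move=> [i|] E; rewrite /Q.
- left; exists i; split => //; move: E; case: pickP => // j /eqP Hj [<-] //.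
- right; eexists; split; [reflexivity|exact E].
Qed.

Section Iso.
Variables (Sig : finType) (arS : Sig -> nat) (X : Type) (arX : X -> nat) (n : nat)
  (G : hgraph arX n) (eta : forall x : X, hgraph arS (arX x)).
Hypothesis Heta : forall x, wf_hgraph (eta x).
Notation m := (maxar arS).
Definition Am : forall x : X, model Sig m (arX x) := fun x => mdl (eta x).
Notation FL := (flat_subst G eta).
Notation K e := (eta (hlab e)).

Lemma ncs e (vv : hV (K e)) : @nc Sig m X arX n G Am e (inl vv) -> nonsrc vv.
Proof.
move=> H; apply/forallP => i; apply/eqP => E; apply: (H i); by rewrite /= E.
Qed.
Lemma ncs' e (vv : hV (K e)) : nonsrc vv -> @nc Sig m X arX n G Am e (inl vv).
Proof.
move=> /forallP H c E; have := H c; rewrite /=.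
have -> : hsrc (K e) c = vv by case: E.
by rewrite eqxx.
Qed.
Lemma nce e (f : hE (K e)) : @nc Sig m X arX n G Am e (inr f).
Proof. by move=> c. Qed.

Definition hNC e (w : @NC Sig m X arX n G Am e) : univ (mdl FL) :=
  match w with exist z H =>
   (match z as z0 return @nc Sig m X arX n G Am e z0 -> univ (mdl FL) with
    | inl vv => fun H => inl (inr (existT (@flatNS_fam _ _ _ _ _ G eta) e (exist _ vv (ncs H))))
    | inr f => fun _ => inr (existT (@flatE_fam _ _ _ _ _ G eta) e f) end) H end.

Definition hmap (u : U G Am) : univ (mdl FL) :=
  match u with inl v => inl (inl v) | inr (existT e w) => hNC w end.

Definition gmap (y : univ (mdl FL)) : U G Am :=
  match y with
  | inl (inl v) => inl v
  | inl (inr (existT e (exist vv P))) => inr (existT (@NC Sig m X arX n G Am) e (exist _ (inl vv) (ncs' P)))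
  | inr (existT e f) => inr (existT (@NC Sig m X arX n G Am) e (exist _ (inr f) (@nce e f)))
  end.

Lemma hgK : cancel hmap gmap.
Proof.
case=> [v|[e [[vv|f] H]]] //=.
- by rewrite (proof_irrelevance _ (ncs' (ncs H)) H).
- by rewrite (proof_irrelevance _ (@nce e f) H).
Qed.

Lemma ghK : cancel gmap hmap.
Proof.
case=> [[v|[e [vv P]]]|[e f]] //=.
by rewrite (proof_irrelevance _ (ncs (ncs' P)) P).
Qed.

Lemma h_emb_inc (e : hE G) (f : hE (K e)) j :
  hmap (@emb _ _ _ _ _ G Am e (inl (hinc f j))) = inl (@flat_inc _ _ _ _ _ G eta (existT _ e f) j).
Proof.
have Hinj := (Heta (hlab e)).2.
rewrite /emb; case: excluded_middle_informative => [Hex|Hn].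
- case: constructive_indefinite_description => c0 /= Hc0.
  have Hc0' : hsrc (K e) c0 = hinc f j by case: Hc0.
  rewrite /flat_inc /=; case: (resolve_cases (hinc f j)) => [[i [-> Hi]]|[P [-> Hp]]].
    by rewrite (Hinj _ _ (etrans Hi (esym Hc0'))).
  have := P => /forallP /(_ c0); rewrite Hc0' eqxx; by [].
- rewrite /flat_inc /=; case: (resolve_cases (hinc f j)) => [[i [-> Hi]]|[P [-> Hp]]].
    by case: Hn; exists i; rewrite /= Hi.
  by rewrite /= (eq_irrelevance (ncs _) P).
Qed.

Lemma iso_main : model_iso (cmodel G Am) (mdl FL).
Proof.
exists hmap, gmap; split; first exact: hgK.
split; first exact: ghK.
split.
  by move=> a [v|[e [[vv|f] H]]].
split; last by [].
move=> i [v|[e [[vv|f] H]]] u2 /=.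
- by split => // -[].
- split => // -[[v'|f'] [_ []]].
- split.
  + case=> z2 [Ez Hb]; case: z2 Ez Hb => [v'|f'] Ez // [hh Hv].
    by rewrite -Ez -Hv h_emb_inc /=; exists hh.
  + case E: (hmap u2) => [y|y] // [hh Hy].
    exists (inl (hinc f (Ordinal hh))); split; last by exists hh.
    apply: (can_inj hgK); by rewrite h_emb_inc E -Hy.
Qed.

End Iso.

Arguments cenv2 {Sig m X arX n G A} e r2 _ _.

Lemma moduli_mono Sig m n (M M' : nat -> Prop) (f : cmso Sig m n) :
  (forall p, M p -> M' p) -> moduli_in M f -> moduli_in M' f.
Proof.
move=> H; elim: f => //=.
- by move=> Y k p [? ?]; split; auto.
- by move=> g IHg h IHh [? ?]; split; auto.
Qed.

Lemma in_image_inj (Sig : finType) (arS : Sig -> nat) k (A : model Sig (maxar arS) k) :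
  in_image A -> injective (cst A).
Proof.
case=> K [[_ Hs] [h [g [hg [gh [_ [_ Hc]]]]]]] c1 c2 E.
have := f_equal h E; rewrite !Hc /= => -[]; exact: Hs.
Qed.

Theorem lemma4p11 (Sig : finType) (arS : Sig -> nat)
    (X : Type) (arX : X -> nat) (n : nat) (G : hgraph arX n) :
  wf_hgraph G ->
  exists f : (forall x : X, model Sig (maxar arS) (arX x)) ->
             model Sig (maxar arS) n,
    cmso_compatible (fun x (A : model Sig (maxar arS) (arX x)) => in_image A) f /\
    (forall eta : forall x : X, hgraph arS (arX x),
       (forall x, wf_hgraph (eta x)) ->
       model_iso (f (fun x => mdl (eta x))) (mdl (flat_subst G eta))).
Proof.
move=> _; exists (cmodel G); split; last by move=> eta Heta; exact: iso_main.
move=> r M A B dA dB Heq f Hs Hr HM.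
have gA : good A by move=> x; exact: in_image_inj (dA x).
have gB : good B by move=> x; exact: in_image_inj (dB x).
have HM' : moduli_in (fun _ => True) f by apply: moduli_mono HM.
have E2 : forall (C : forall x, model Sig (maxar arS) (arX x)) e,
    cenv2 (A:=C) (G:=G) e (fun _ _ => False) = (fun _ _ => False).
  move=> C e; apply: functional_extensionality => j; apply: functional_extensionality => z.
  by apply: propositional_extensionality; split => // -[].
have Ag : agree (G:=G) (A:=A) (B:=B) (fun _ => None) (fun _ _ => False) (fun _ => None) (fun _ _ => False) f.
  move=> e g Hg; have [R [Mo C]] := phi_props Hg.
  rewrite !E2; apply: (Heq (hlab e) g).
  - exact: (C [::] [::] Hs).
  - exact: leq_trans R Hr.
  - exact: Mo M HM.
have Sk : skel (G:=G) (A:=A) (B:=B) (fun _ => None) (fun _ _ => False) (fun _ => None) (fun _ _ => False).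
  by split.
split.
- exact: main HM' A B gA gB _ _ _ _ Sk Ag.
- exact: main HM' B A gB gA _ _ _ _ (skel_sym Sk) (agree_sym Ag).
Qed.
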